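(* Let $F$ be a field, let $e_1\in M_n(F)$ be an idempotent of rank $r$ with $0<r<n$, and set $e_2=I_n-e_1$. Let $\sigma_1\ne\sigma_2\in F$ be such that $k_1\sigma_1+k_2\sigma_2\ne0$ for all integer pairs $(k_1,k_2)\ne(0,0)$ with $0\le k_1\le r$, $0\le k_2\le n-r$. Then $$V=\big(\{\sigma_1e_1+\sigma_2e_2\}\cup e_1M_n(F)e_2\big)^\perp=\{a\in M_n(F):\ e_2ae_1=0,\ \sigma_1\mathrm{Tr}(e_1ae_1)+\sigma_2\mathrm{Tr}(e_2ae_2)=0\}$$ is a maximal Mathieu subspace of $M_n(F)$ of codimension $rn-r^2+1$.
   Context: Let $\mathcal A$ be an associative algebra over a field $F$. An $F$-subspace $M\subseteq\mathcal A$ is a Mathieu subspace (MS) of $\mathcal A$ if for all $a,b,c\in\mathcal A$ such that $a^m\in M$ for all $m\ge 1$, there exists $N$ (depending on $a,b,c$) such that $ba^mc\in M$ for all $m\ge N$. A maximal MS of $\mathcal A$ is a proper MS of $\mathcal A$ that is not properly contained in any proper MS of $\mathcal A$. For $S\subseteq M_n(F)$, $S^\perp=\{b\in M_n(F):\mathrm{Tr}(bx)=0\ \forall x\in S\}$. *)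

(* Defs.v *)
From HB Require Import structures.
From mathcomp Require Import all_boot all_order all_algebra.
Set Implicit Arguments. Unset Strict Implicit. Unset Printing Implicit Defensive.
Import GRing.Theory.
Local Open Scope ring_scope.

(* m-th power of a square matrix (works for every n, including n = 0,
   where 'M_n is not a ring in MathComp) *)
Definition mxpow (F : fieldType) (n : nat) (a : 'M[F]_n) (m : nat) : 'M[F]_n :=
  iter m (mulmx a) 1%:M.

(* Mathieu subspace of the algebra M_n(F); F-subspaces of M_n(F) are
   represented as {vspace 'M[F]_n} (all subspaces, since finite-dimensional). *)
Definition mathieu_subspace (F : fieldType) (n : nat) (M : {vspace 'M[F]_n}) : Prop :=
  forall a b c : 'M[F]_n,
    (forall m, (1 <= m)%N -> mxpow a m \in M) ->
    exists N : nat, forall m, (N <= m)%N -> b *m mxpow a m *m c \in M.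

Definition maximal_mathieu_subspace (F : fieldType) (n : nat) (M : {vspace 'M[F]_n}) : Prop :=
  [/\ mathieu_subspace M, M != fullv &
      forall N : {vspace 'M[F]_n}, mathieu_subspace N -> N != fullv ->
        (M <= N)%VS -> N = M].

Definition perp (F : fieldType) (n : nat) (S : 'M[F]_n -> Prop) (b : 'M[F]_n) : Prop :=
  forall x, S x -> \tr (b *m x) = 0.

(* Main.v *)
Require Import Defs.
From HB Require Import structures.
From mathcomp Require Import all_boot all_order all_algebra.
From mathcomp Require Import ring.
Import GRing.Theory.
Local Open Scope ring_scope.

Lemma idem_fact (F : fieldType) (n : nat) (e : 'M[F]_n) :
  e *m e = e -> row_base e *m col_base e = 1%:M.
Proof.
move=> He.
have /row_fullP[B HB] := col_base_full e.
have /row_freeP[C HC] := row_base_free e.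
set P := col_base e in HB *; set Q := row_base e in HC *.
have eE : P *m Q = e by exact: mulmx_base.
clearbody P Q.
have H : B *m (P *m Q *m (P *m Q)) *m C = B *m (P *m Q) *m C by rewrite eE He.
by move: H; rewrite !mulmxA HB !mul1mx -!mulmxA HC !mulmx1.
Qed.

Lemma trace_idem (F : fieldType) (n : nat) (e : 'M[F]_n) :
  e *m e = e -> \tr e = (\rank e)%:R.
Proof.
move=> He.
have eE : col_base e *m row_base e = e by exact: mulmx_base.
by rewrite -[in LHS]eE mxtrace_mulC idem_fact // mxtrace1.
Qed.

Lemma mul_delta_l (F : fieldType) n (k i : 'I_n) (g : 'M[F]_n) a c :
  (delta_mx k i *m g) a c = (a == k)%:R * g i c.
Proof.
rewrite mxE (bigD1 i) //= big1 => [|d /negbTE Hd]; rewrite mxE ?Hd ?andbF ?mul0r //.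
by rewrite eqxx andbT addr0.
Qed.

Lemma mul_delta_r (F : fieldType) n (j l : 'I_n) (g : 'M[F]_n) a b :
  (g *m delta_mx j l) a b = g a j * (b == l)%:R.
Proof.
rewrite mxE (bigD1 j) //= big1 => [|d /negbTE Hd]; rewrite mxE ?Hd ?mulr0 //.
by rewrite eqxx addr0.
Qed.

Lemma delta_sandwich (F : fieldType) n (k i j l : 'I_n) (g : 'M[F]_n) :
  delta_mx k i *m g *m delta_mx j l = g i j *: delta_mx k l.
Proof.
apply/matrixP => a b; rewrite mul_delta_r mul_delta_l !mxE.
by case: (a == k); case: (b == l); rewrite /= ?mul1r ?mul0r ?mulr1 ?mulr0.
Qed.

Lemma tr_delta (F : fieldType) n (i j : 'I_n) (A : 'M[F]_n) :
  \tr (A *m delta_mx j i) = A i j.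
Proof.
rewrite /mxtrace (bigD1 i) //= big1 => [|k /negbTE Hk]; rewrite mul_delta_r.
  by rewrite eqxx mulr1 addr0.
by rewrite Hk mulr0.
Qed.

Lemma ideal_full (F : fieldType) n (N : {vspace 'M[F]_n}) (g : 'M[F]_n) :
  g != 0 -> (forall b c, b *m g *m c \in N) -> N = fullv.
Proof.
move=> g0 Hg.
have [i [j Hij]] : exists i j, g i j != 0.
  case: (boolP [exists i, exists j, g i j != 0]) => [/existsP[i /existsP[j H]]|/existsPn H].
    by exists i, j.
  case/eqP: g0; apply/matrixP => i j; move: (H i) => /existsPn /(_ j).
  by rewrite negbK mxE => /eqP.
apply/eqP; rewrite eqEsubv subvf /=; apply/subvP => z _.
rewrite (matrix_sum_delta z); apply: memv_suml => k _; apply: memv_suml => l _.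
apply: memvZ.
have -> : delta_mx k l = (g i j)^-1 *: (delta_mx k i *m g *m delta_mx j l).
  by rewrite delta_sandwich scalerA mulVf // scale1r.
exact/memvZ/Hg.
Qed.

Lemma mxpowS (F : fieldType) n (a : 'M[F]_n) m : mxpow a m.+1 = a *m mxpow a m.
Proof. by []. Qed.

Lemma mxpowD (F : fieldType) n (a : 'M[F]_n) m k :
  mxpow a (m + k) = mxpow a m *m mxpow a k.
Proof.
elim: m => [|m IH]; first by rewrite add0n /= mul1mx.
by rewrite addSn !mxpowS IH mulmxA.
Qed.

Lemma ms_idem (F : fieldType) n (N : {vspace 'M[F]_n}) g :
  mathieu_subspace N -> g *m g = g -> g \in N -> forall b c, b *m g *m c \in N.
Proof.
move=> HN Hg gN b c.
have Hp : forall m, (1 <= m)%N -> mxpow g m = g.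
  case=> // m _; elim: m => [|m IH]; first by rewrite mxpowS /= mulmx1.
  by rewrite mxpowS IH Hg.
have [N0 HN0] := HN g b c (fun m Hm => etrans (congr1 _ (Hp m Hm)) gN).
by have := HN0 N0.+1 (leqnSn _); rewrite Hp.
Qed.

Lemma fitting (F : fieldType) n (a : 'M[F]_n) (S : {vspace 'M[F]_n}) :
  (forall m, (1 <= m)%N -> mxpow a m \in S) ->
  (forall E, E \in S -> E *m E = E -> E = 0) -> exists k, mxpow a k = 0.
Proof.
case: n a S => [|n'] a S Ha HS.
  by exists 0%N; apply/matrixP => [[]].
have pw : forall m, mxpow a m = a ^+ m.
  elim=> [|m IH]; first by rewrite expr0.
  by rewrite mxpowS IH exprS mulmxE.
set p := char_poly a.
have p0 : p != 0 by rewrite monic_neq0 // char_poly_monic.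
have [k [q Hq pE]] := multiplicity_XsubC p 0.
rewrite p0 /= in Hq.
rewrite polyC0 subr0 in pE.
have cop : coprimep ('X ^+ k.+1) q.
  by apply: coprimep_expl; rewrite coprimep_sym coprimepX.
have [[u v] /= Huv] := Bezout_eq1_coprimepP _ _ cop.
pose E := horner_mx a (u * 'X ^+ k.+1).
have hX : forall K, horner_mx a ('X^K) = a ^+ K.
  by move=> K; rewrite rmorphXn /= horner_mx_X.
have ES : E \in S.
  rewrite /E rmorphM /= -(coefK u) poly_def rmorph_sum /= mulr_suml.
  apply: memv_suml => i _; rewrite linearZ /= !hX -scalerAl -exprD -pw.
  by apply/memvZ/Ha; rewrite addnS.
have hp : horner_mx a p = 0 := Cayley_Hamilton a.
have h1 : 1 - E = horner_mx a (v * q).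
  by apply/eqP; rewrite subr_eq /E -rmorphD /= [v * q + _]addrC Huv rmorph1.
have EE : E * E = E.
  have : E * (1 - E) = 0.
    rewrite h1 /E -rmorphM.
    have -> : u * 'X^(k.+1) * (v * q) = (u * v * 'X) * p by rewrite pE exprS; ring.
    by rewrite rmorphM /= hp mulr0.
  by rewrite mulrBr mulr1 => /eqP; rewrite subr_eq0 => /eqP.
have E0 : E = 0 by apply: HS => //; rewrite mulmxE.
exists k; rewrite pw.
have h2 : horner_mx a v * horner_mx a q = 1 by rewrite -[RHS](subr0 1) -E0 h1 rmorphM.
have hp' : horner_mx a q * a ^+ k = 0 by rewrite -hX -rmorphM -pE; exact: hp.
by rewrite -[a ^+ k]mul1r -h2 -mulrA hp' mulr0.
Qed.

Section Main.
Variables (F : fieldType) (n' r : nat) (e1 : 'M[F]_n'.+1) (s1 s2 : F).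
Local Notation n := n'.+1.
Hypothesis He1 : e1 *m e1 = e1.
Hypothesis Hr : \rank e1 = r.
Hypothesis Hr0 : (0 < r)%N.
Hypothesis Hrn : (r < n)%N.
Hypothesis Hs : s1 != s2.
Hypothesis Hk : forall k1 k2 : nat, (k1 <= r)%N -> (k2 <= n - r)%N ->
  (k1, k2) != (0%N, 0%N) -> k1%:R * s1 + k2%:R * s2 != 0.

Local Notation e2 := (1%:M - e1).

Lemma e1e2 : e1 *m e2 = 0. Proof. by rewrite mulmxBr mulmx1 He1 subrr. Qed.
Lemma e2e1 : e2 *m e1 = 0. Proof. by rewrite mulmxBl mul1mx He1 subrr. Qed.
Lemma e2e2 : e2 *m e2 = e2. Proof. by rewrite mulmxBr mulmx1 e2e1 subr0. Qed.
Lemma e12 : e1 + e2 = 1%:M. Proof. by rewrite addrC subrK. Qed.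

Definition w (a : 'M[F]_n) : F^o := s1 * \tr (e1 *m a *m e1) + s2 * \tr (e2 *m a *m e2).

Lemma w_lin : linear w.
Proof.
move=> k x y; rewrite /w !mulmxDr !mulmxDl !mxtraceD -!scalemxAr -!scalemxAl !mxtraceZ.
rewrite [k *: _]/GRing.scale /=. ring.
Qed.

HB.instance Definition _ := GRing.isLinear.Build F 'M[F]_n F^o *:%R w w_lin.

Definition P1 := locked (col_base e1).
Definition Q1 := locked (row_base e1).
Definition P2 := locked (col_base e2).
Definition Q2 := locked (row_base e2).

Lemma Q1P1 : Q1 *m P1 = 1%:M. Proof. rewrite /Q1 /P1 -!lock; exact: idem_fact. Qed.
Lemma Q2P2 : Q2 *m P2 = 1%:M. Proof. rewrite /Q2 /P2 -!lock; exact/idem_fact/e2e2. Qed.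
Lemma P1Q1 : P1 *m Q1 = e1. Proof. rewrite /Q1 /P1 -!lock; exact: mulmx_base. Qed.
Lemma P2Q2 : P2 *m Q2 = e2. Proof. rewrite /Q2 /P2 -!lock; exact: mulmx_base. Qed.
Lemma Q1e1 : Q1 *m e1 = Q1. Proof. by rewrite -[X in Q1 *m X]P1Q1 mulmxA Q1P1 mul1mx. Qed.
Lemma e1P1 : e1 *m P1 = P1. Proof. by rewrite -[X in X *m P1]P1Q1 -mulmxA Q1P1 mulmx1. Qed.
Lemma Q2e2 : Q2 *m e2 = Q2. Proof. by rewrite -[X in Q2 *m X]P2Q2 mulmxA Q2P2 mul1mx. Qed.
Lemma e2P2 : e2 *m P2 = P2. Proof. by rewrite -[X in X *m P2]P2Q2 -mulmxA Q2P2 mulmx1. Qed.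
Lemma Q2P1 : Q2 *m P1 = 0.
Proof. by rewrite -[X in X *m _ = _]Q2e2 -[X in _ *m X = _]e1P1 mulmxA -(mulmxA Q2) e2e1 mulmx0 mul0mx. Qed.
Lemma Q1P2 : Q1 *m P2 = 0.
Proof. by rewrite -[X in X *m _ = _]Q1e1 -[X in _ *m X = _]e2P2 mulmxA -(mulmxA Q1) e1e2 mulmx0 mul0mx. Qed.
Lemma Q1e2 : Q1 *m e2 = 0. Proof. by rewrite -[X in X *m _ = _]Q1e1 -mulmxA e1e2 mulmx0. Qed.
Lemma Q2e1 : Q2 *m e1 = 0. Proof. by rewrite -[X in X *m _ = _]Q2e2 -mulmxA e2e1 mulmx0. Qed.
Lemma e1P2 : e1 *m P2 = 0. Proof. by rewrite -[X in _ *m X = _]e2P2 mulmxA e1e2 mul0mx. Qed.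
Lemma e2P1 : e2 *m P1 = 0. Proof. by rewrite -[X in _ *m X = _]e1P1 mulmxA e2e1 mul0mx. Qed.

Lemma rank_sum : (\rank e1 + \rank e2 = n)%N.
Proof.
apply/eqP; rewrite eqn_leq; apply/andP; split.
  have := leq_trans (mxrankM_maxl (col_mx Q1 Q2) (row_mx P1 P2)) (rank_leq_col _).
  by rewrite mul_col_row Q1P1 Q1P2 Q2P1 Q2P2 -scalar_mx_block mxrank1.
by have := mxrank_add e1 e2; rewrite e12 mxrank1.
Qed.

Lemma rank_e2 : \rank e2 = (n - r)%N.
Proof.
have := rank_sum; rewrite Hr => H.
by apply/eqP; rewrite -(eqn_add2l r) H subnKC // ltnW.
Qed.

Definition h (a : 'M[F]_n) : ('M[F]_(\rank e2, \rank e1) * F^o)%type :=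
  (Q2 *m a *m P1, w a).

Lemma h_lin : linear h.
Proof.
move=> k x y; rewrite /h w_lin mulmxDr mulmxDl -scalemxAr -scalemxAl.
by [].
Qed.

HB.instance Definition _ := GRing.isLinear.Build F 'M[F]_n _ *:%R h h_lin.

Definition V := lker (linfun h).

Lemma memV a : (a \in V) = (Q2 *m a *m P1 == 0) && (w a == 0).
Proof. by rewrite memv_ker lfunE. Qed.

Lemma memV' a : a \in V <-> e2 *m a *m e1 = 0 /\ w a = 0.
Proof.
rewrite memV; split.
  case/andP => /eqP H1 /eqP H2; split => //.
  have -> : e2 *m a *m e1 = P2 *m (Q2 *m a *m P1) *m Q1.
    by rewrite !mulmxA P2Q2 -!mulmxA P1Q1.
  by rewrite H1 mulmx0 mul0mx.
case=> H1 H2; apply/andP; split; apply/eqP => //.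
have -> : Q2 *m a *m P1 = Q2 *m (e2 *m a *m e1) *m P1.
  by rewrite !mulmxA Q2e2 -!mulmxA e1P1.
by rewrite H1 mulmx0 mul0mx.
Qed.

Lemma s1r0 : s1 * (\rank e1)%:R != 0.
Proof.
have rz : (r, 0%N) != (0%N, 0%N) by rewrite xpair_eqE andbT -lt0n.
by have := Hk r 0 (leqnn r) (leq0n _) rz; rewrite mul0r addr0 mulrC Hr. Qed.

Lemma we1 : w e1 = s1 * (\rank e1)%:R.
Proof.
rewrite /w !He1 e2e1 mul0mx mxtrace0 mulr0 addr0.
by rewrite trace_idem.
Qed.

Lemma limg_full : limg (linfun h) = fullv.
Proof.
apply/eqP; rewrite eqEsubv subvf /=; apply/subvP => -[X t] _.
set s := t / (s1 * (\rank e1)%:R).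
have -> : (X, t) = linfun h (P2 *m X *m Q1 + s *: e1).
  rewrite lfunE /h /=; congr (_, _).
    rewrite mulmxDr mulmxDl -scalemxAr -scalemxAl !mulmxA Q2P2 mul1mx.
    by rewrite -mulmxA Q1P1 mulmx1 Q2e1 mul0mx scaler0 addr0.
  have -> : w (P2 *m X *m Q1 + s *: e1) = w (P2 *m X *m Q1) + s * w e1.
    by rewrite addrC w_lin addrC.
  rewrite we1 /s divfK ?s1r0 //.
  rewrite /w !mulmxA e1P2 !mul0mx mxtrace0 mulr0 add0r.
  by rewrite -!mulmxA Q1e2 !mulmx0 mxtrace0 mulr0 add0r.
exact/memv_img/memvf.
Qed.

Lemma dimV : (\dim V + (\rank e2 * \rank e1 + 1) = n * n)%N.
Proof.
by have := limg_ker_dim (linfun h) fullv; rewrite capfv limg_full !dimvf.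
Qed.

Lemma wD a b : w (a + b) = w a + w b.
Proof. by have := w_lin 1 a b; rewrite !scale1r. Qed.

Lemma wZ k a : w (k *: a) = k * w a.
Proof.
rewrite /w -!scalemxAr -!scalemxAl !mxtraceZ.
by rewrite mulrCA [s2 * _]mulrCA mulrDr.
Qed.

Lemma wN a : w (- a) = - w a.
Proof. by rewrite -scaleN1r wZ mulN1r. Qed.

Lemma wB a b : w (a - b) = w a - w b.
Proof. by rewrite wD wN. Qed.

Lemma tr_e (e a : 'M[F]_n) : e *m e = e -> \tr (a *m e) = \tr (e *m a *m e).
Proof. by move=> He; rewrite -{1}He mulmxA mxtrace_mulC mulmxA. Qed.

Lemma w_tr a : \tr (a *m (s1 *: e1 + s2 *: e2)) = w a.
Proof.
rewrite mulmxDr -!scalemxAr mxtraceD !mxtraceZ (tr_e _ _ He1) (tr_e _ _ e2e2).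
by [].
Qed.

Lemma tr_off a m : \tr (a *m (e1 *m m *m e2)) = \tr (e2 *m a *m e1 *m m).
Proof. by rewrite !mulmxA mxtrace_mulC !mulmxA. Qed.

Lemma perpV a : a \in V <->
  perp (fun x => x = s1 *: e1 + s2 *: e2 \/ exists m : 'M[F]_n, x = e1 *m m *m e2) a.
Proof.
split.
  move/memV' => [H1 H2] x [->|[m ->]]; first by rewrite w_tr.
  by rewrite tr_off H1 mul0mx mxtrace0.
move=> Hp; apply/memV'; split.
  apply/matrixP => i j.
  have := Hp (e1 *m delta_mx j i *m e2) (or_intror (ex_intro _ _ erefl)).
  by rewrite tr_off tr_delta => ->; rewrite mxE.
by rewrite -w_tr; apply: Hp; left.
Qed.

Lemma V_idem0 E : E \in V -> E *m E = E -> E = 0.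
Proof.
move=> /memV' [H1 H2] HE.
rewrite /w in H2.
have e12' := e12; have e2e1' := e2e1; have rk2 := rank_e2.
set f := (1%:M - e1) in H1 H2 e12' e2e1' rk2 *.
clearbody f.
have Ee1 : E *m e1 = e1 *m E *m e1.
  transitivity ((e1 + f) *m E *m e1); first by rewrite e12' mul1mx.
  by rewrite !mulmxDl H1 addr0.
have e2E : f *m E = f *m E *m f.
  transitivity (f *m E *m (e1 + f)); first by rewrite e12' mulmx1.
  by rewrite mulmxDr H1 add0r.
have AA : (e1 *m E *m e1) *m (e1 *m E *m e1) = e1 *m E *m e1.
  by rewrite -Ee1 -mulmxA [e1 *m (E *m e1)]mulmxA -Ee1 mulmxA HE.
have DD : (f *m E *m f) *m (f *m E *m f) = f *m E *m f.
  by rewrite -e2E mulmxA -e2E -mulmxA HE.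
have rA : (\rank (e1 *m E *m e1) <= r)%N.
  by rewrite -Hr -mulmxA; apply: mxrankM_maxl.
have rD : (\rank (f *m E *m f) <= n - r)%N.
  by rewrite -rk2 -mulmxA; apply: mxrankM_maxl.
move: H2; rewrite (trace_idem _ _ _ AA) (trace_idem _ _ _ DD) => H2.
have : (\rank (e1 *m E *m e1), \rank (f *m E *m f)) == (0%N, 0%N).
  apply: contraLR isT => /(Hk _ _ rA rD); rewrite mulrC [_ * s2]mulrC H2.
  by rewrite eqxx.
rewrite xpair_eqE !mxrank_eq0 => /andP[/eqP A0 /eqP D0].
have EE : E = e1 *m E *m f.
  transitivity (E *m (e1 + f)); first by rewrite e12' mulmx1.
  rewrite mulmxDr Ee1 A0 add0r.
  transitivity ((e1 + f) *m E *m f); first by rewrite e12' mul1mx.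
  by rewrite !mulmxDl D0 addr0.
have H0 : E *m E = 0.
  by rewrite EE !mulmxA -(mulmxA (e1 *m E)) e2e1' mulmx0 !mul0mx.
by rewrite -HE H0.
Qed.

Lemma V_ms : mathieu_subspace V.
Proof.
move=> a b c Ha; have [k Hk0] := fitting _ _ _ _ Ha V_idem0.
exists k => m Hm.
by rewrite -(subnK Hm) (mxpowD _ _ a) Hk0 !mulmx0 mul0mx mem0v.
Qed.

Lemma V_proper : V != fullv.
Proof.
apply/eqP => HV.
have : e1 \in V by rewrite HV memvf.
by move/memV' => [_]; rewrite we1 => /eqP; rewrite (negbTE s1r0).
Qed.

Lemma V_max N : mathieu_subspace N -> N != fullv -> (V <= N)%VS -> N = V.
Proof.
move=> HN Nf VN.
apply/eqP; rewrite eqEsubv VN andbT.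
apply/subvP => x xN; case: (boolP (x \in V)) => // xV; exfalso.
suff [g [g0 gN gg]] : exists g, [/\ g != 0, g \in N & g *m g = g].
  by move/eqP: Nf; apply; apply: (ideal_full _ _ _ _ g0); exact: ms_idem.
have VtoN := subvP VN.
have He1' : e1 * e1 = e1 by rewrite -mulmxE.
have e1e2' : e1 * e2 = 0 by rewrite -mulmxE e1e2.
have e2e1' : e2 * e1 = 0 by rewrite -mulmxE e2e1.
have e2e2' : e2 * e2 = e2 by rewrite -mulmxE e2e2.
have [c cE] : {c | c = e2 * x * e1} by exists (e2 * x * e1).
have ce1 : c * e1 = c by rewrite cE -mulrA He1'.
have e2c : e2 * c = c by rewrite cE !mulrA e2e2'.
have e1c : e1 * c = 0 by rewrite cE !mulrA e1e2' !mul0r.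
have ce2 : c * e2 = 0 by rewrite cE -mulrA e1e2' mulr0.
have cc : c * c = 0 by rewrite -{2}e2c mulrA ce2 mul0r.
have wc : w c = 0.
  by rewrite /w !mulmxE e1c e2c ce2 mul0r !mxtrace0 !mulr0 addr0.
have [l lE] : {l | l = w x / (s1 * (\rank e1)%:R)} by eexists.
have yV : x - (c + l *: e1) \in V.
  apply/memV'; split.
    rewrite !mulmxE mulrBr mulrBl -cE [e2 * (_ + _)]mulrDr [(_ + _) * e1]mulrDl e2c ce1 -scalerAr e2e1'.
    by rewrite scaler0 mul0r addr0 subrr.
  by rewrite wB wD wZ wc we1 add0r lE divfK ?s1r0 // subrr.
case: (eqVneq l 0) => [l0|l0].
  have c0 : c != 0.
    apply/eqP => c0; move: yV; rewrite c0 l0 scale0r addr0 subr0.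
    exact/negP.
  have cN : c \in N.
    have -> : c = x - (x - (c + l *: e1)) by rewrite l0 scale0r addr0 opprB addrC subrK.
    exact: (memvB xN (VtoN _ yV)).
  have [Z ZE] : {Z | Z = pinvmx c} by eexists.
  have cZc : c * Z * c = c by rewrite ZE -!mulmxE mulmxKpV.
  have [B1 B1E] : {B1 | B1 = e1 * Z * e2} by eexists.
  have e1B1 : e1 * B1 = B1 by rewrite B1E !mulrA He1'.
  have B1e2 : B1 * e2 = B1 by rewrite B1E -mulrA e2e2'.
  have cB1c : c * B1 * c = c by rewrite B1E !mulrA ce1 -mulrA e2c cZc.
  have hX : forall X, X * c * B1 * c = X * c.
    by move=> X; rewrite -!mulrA (mulrA c B1 c) cB1c.
  have [B BE] : {B | B = B1 * c * B1} by eexists.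
  have e1B : e1 * B = B by rewrite BE !mulrA e1B1.
  have Be2 : B * e2 = B by rewrite BE -mulrA B1e2.
  have Be1 : B * e1 = 0 by rewrite -Be2 -mulrA e2e1' mulr0.
  have e2B : e2 * B = 0 by rewrite -e1B mulrA e2e1' mul0r.
  have BB' : forall X, X * B * B = 0.
    by move=> X; rewrite -mulrA -{1}Be2 -mulrA e2B !mulr0.
  have cBc : c * B * c = c by rewrite BE !mulrA hX cB1c.
  have BcB : B * c * B = B by rewrite BE !mulrA !hX.
  have [p pE] : {p | p = s2 / (s2 - s1)} by eexists.
  have [q qE] : {q | q = 1 - p} by eexists.
  have pq : p + q = 1 by rewrite qE addrC subrK.
  have spq : s1 * p + s2 * q = 0.
    rewrite qE pE; field; by rewrite subr_eq0 eq_sym.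
  pose u := p *: B + c * B.
  pose v := c + q *: (c * B).
  have vu : v * u = c * B.
    rewrite /u /v mulrDl !mulrDr -!scalerAl -!scalerAr !mulrA cc BB' cBc mul0r.
    by rewrite !scaler0 addr0 add0r -scalerDl pq scale1r.
  have ucB : u * (c * B) = u by rewrite /u mulrDl -!scalerAl !mulrA BcB cBc.
  have e2u : e2 * u = c * B.
    by rewrite /u mulrDr -scalerAr e2B scaler0 add0r mulrA e2c.
  have ve1 : v * e1 = c.
    by rewrite /v mulrDl -scalerAl -mulrA Be1 mulr0 scaler0 addr0 ce1.
  have e1u : e1 * u = p *: B.
    by rewrite /u mulrDr -scalerAr e1B mulrA e1c mul0r addr0.
  have ve2 : v * e2 = q *: (c * B).
    by rewrite /v mulrDl ce2 add0r -scalerAl -mulrA Be2.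
  pose g := u * v.
  have gg : g * g = g by rewrite /g mulrA -(mulrA u v u) vu ucB.
  have e2ge1 : e2 * g * e1 = c by rewrite /g mulrA -mulrA e2u ve1 cBc.
  have e1ge1 : e1 * g * e1 = p *: (B * c) by rewrite /g mulrA -mulrA e1u ve1 -scalerAl.
  have e2ge2 : e2 * g * e2 = q *: (c * B).
    by rewrite /g mulrA -mulrA e2u ve2 -scalerAr mulrA cBc.
  have trBc : \tr (B * c) = \tr (c * B) by exact: mxtrace_mulC.
  have wg : w g = 0.
    by rewrite /w !mulmxE e1ge1 e2ge2 !mxtraceZ trBc !mulrA -mulrDl spq mul0r.
  have gcV : g - c \in V.
    apply/memV'; split; last by rewrite wB wg wc subrr.
    by rewrite !mulmxE mulrBr mulrBl e2ge1 e2c ce1 subrr.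
  exists g; split.
  - apply/eqP => g0; move: e2ge1; rewrite g0 mulr0 mul0r => c00.
    by rewrite -c00 eqxx in c0.
  - have -> : g = (g - c) + c by rewrite subrK.
    exact: (memvD (VtoN _ gcV) cN).
  - by rewrite mulmxE.
exists (e1 + l^-1 *: c); split.
- apply/eqP => g0.
  have : e1 * (e1 + l^-1 *: c) * e1 = e1.
    by rewrite mulrDr -scalerAr e1c scaler0 addr0 !He1'.
  rewrite g0 mulr0 mul0r => e10.
  by move: Hr0; rewrite -Hr -e10 mxrank0.
- have -> : e1 + l^-1 *: c = l^-1 *: (x - (x - (c + l *: e1))).
    by rewrite opprB [x + _]addrC subrK scalerDr scalerA mulVf // scale1r addrC.
  exact/memvZ/(memvB xN (VtoN _ yV)).
- rewrite mulmxE mulrDl !mulrDr -!scalerAl -!scalerAr He1' e1c ce1 cc.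
  by rewrite !scaler0 !addr0.
Qed.

End Main.

Theorem corollary2p6 (F : fieldType) (n r : nat) (e1 : 'M[F]_n)
  (sigma1 sigma2 : F) :
  e1 *m e1 = e1 ->
  \rank e1 = r ->
  (0 < r)%N -> (r < n)%N ->
  sigma1 != sigma2 ->
  (forall k1 k2 : nat, (k1 <= r)%N -> (k2 <= n - r)%N -> (k1, k2) != (0%N, 0%N) ->
     k1%:R * sigma1 + k2%:R * sigma2 != 0) ->
  let e2 := 1%:M - e1 in
  exists V : {vspace 'M[F]_n},
    [/\ (forall a, a \in V <->
           perp (fun x => x = sigma1 *: e1 + sigma2 *: e2 \/
                          exists m : 'M[F]_n, x = e1 *m m *m e2) a),
        (forall a, a \in V <->
           (e2 *m a *m e1 = 0 /\
            sigma1 * \tr (e1 *m a *m e1) + sigma2 * \tr (e2 *m a *m e2) = 0)),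
        maximal_mathieu_subspace V &
        (\dim (fullv : {vspace 'M[F]_n}) - \dim V = r * n - r ^ 2 + 1)%N].
Proof.
move=> He1 Hr Hr0 Hrn Hs Hk e2; rewrite /e2 {e2}.
case: n e1 He1 Hr Hrn Hk => [|n'] e1 He1 Hr Hrn Hk; first by rewrite ltn0 in Hrn.
exists (@V F n' e1 sigma1 sigma2); split.
- by move=> a; eapply perpV; eassumption.
- by move=> a; exact: (memV' _ _ _ _ _ He1 a).
- rewrite /maximal_mathieu_subspace; split.
  + by eapply V_ms; eassumption.
  + by eapply V_proper; eassumption.
  + by move=> N; eapply V_max; eassumption.
have HD : (\dim (@V F n' e1 sigma1 sigma2) +
    (\rank (1%:M - e1)%R * \rank e1 + 1) = n'.+1 * n'.+1)%N by eapply dimV; eassumption.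
have R2 : \rank (1%:M - e1)%R = (n'.+1 - r)%N by eapply rank_e2; eassumption.
rewrite R2 Hr in HD.
have -> : \dim (fullv : {vspace 'M[F]_n'.+1}) = (n'.+1 * n'.+1)%N by rewrite dimvf.
by rewrite -HD addKn mulnBl -mulnn [(n'.+1 * r)%N]mulnC.
Qed.
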